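(* Let $k\ge1$ and $m\ge1$ be integers. Consider all $k$-Dyck paths with exactly $m+1$ up-steps. For each such path, let $r(P)$ be the number of down-steps in the maximal run of down-steps immediately following its first up-step (so $0\le r(P)\le k$). Then $$\sum_{P} r(P)=\frac{k}{m+1}\binom{(k+1)m}{m}.$$
   Context: A $k$-Dyck path is a lattice path from $(0,0)$ to a point on the $x$-axis using up-steps $(1,k)$ and down-steps $(1,-1)$ that never goes below the $x$-axis. *)

(* Defs.v *)
From mathcomp Require Import all_boot all_order all_algebra.
Set Implicit Arguments. Unset Strict Implicit. Unset Printing Implicit Defensive.

(* A step sequence: true = up-step (1,k), false = down-step (1,-1).
   Height after the prefix take i s is k * #ups - #downs. *)

Definition is_kDyck (k : nat) (s : seq bool) : bool :=
  [forall i : 'I_(size s).+1,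
     count negb (take i s) <= k * count id (take i s)]
  && (count negb s == k * count id s).

Definition first_down_run (s : seq bool) : nat :=
  find id (drop (index true s).+1 s).

(* Main.v *)
Require Import Defs.
From mathcomp Require Import all_boot all_order all_algebra.
From mathcomp Require Import zify.
Fixpoint okp (k h : nat) (s : seq bool) : bool :=
  match s with
  | [::] => h == 0
  | b :: s' => if b then okp k (h + k) s' else (0 < h) && okp k h.-1 s'
  end.

Lemma iota1 n : iota 1 n = map succn (iota 0 n).
Proof. by elim: n 0 => [|n IH] a //=; rewrite IH. Qed.

Lemma okpE k h s : okp k h s =
  all (fun i => count negb (take i s) <= h + k * count id (take i s))
      (iota 0 (size s).+1) && (count negb s == h + k * count id s).
Proof.
have allc (p : pred nat) x l : all p (x :: l) = p x && all p l by [].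
elim: s h => [|b s IH] h.
  by rewrite /= muln0 addn0 eq_sym.
rewrite (_ : iota 0 (size (b :: s)).+1 = 0 :: map succn (iota 0 (size s).+1));
  last by rewrite -iota1.
rewrite allc all_map take0.
have tk : forall i, take i.+1 (b :: s) = b :: take i s by [].
rewrite (eq_all (a2 := fun i => count negb (b :: take i s) <= h + k * count id (b :: take i s)));
  last by move=> i /=; rewrite ?tk.
clear tk; case: b => /=.
  rewrite IH; congr (_ && _).
    by apply: eq_all => i /=; rewrite mulnS addnA.
  by rewrite mulnS addnA.
case: h => [|h] /=.
  by rewrite take0 /= muln0.
by rewrite IH.
Qed.

Lemma is_kDyckE k s : is_kDyck k s = okp k 0 s.
Proof.
rewrite okpE /is_kDyck add0n; congr (_ && _).
apply/forallP/allP => H.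
  move=> i; rewrite mem_iota add0n => /andP[_ lt].
  by rewrite add0n; exact: (H (Ordinal lt)).
by move=> i; have := H i; rewrite mem_iota ltn_ord add0n; apply.
Qed.
Fixpoint E n : seq (seq bool) :=
  if n is n'.+1 then map (cons true) (E n') ++ map (cons false) (E n') else [:: [::]].

Lemma cons_inj (b : bool) : injective (cons b).
Proof. by move=> x y []. Qed.

Lemma nm b b' t (l : seq (seq bool)) : b != b' -> (b :: t \in map (cons b') l) = false.
Proof. by move=> nb; apply/mapP => -[x _ [e _]]; rewrite e eqxx in nb. Qed.

Lemma memE n s : (s \in E n) = (size s == n).
Proof.
elim: n s => [|n IH] [|b s] //=.
  rewrite mem_cat; apply/norP; split; apply/mapP; by case.
rewrite mem_cat eqSS -IH; case: b; rewrite mem_map ?nm //; last by apply: cons_inj.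
  by rewrite orbF.
by apply: cons_inj.
Qed.

Lemma uniqE n : uniq (E n).
Proof.
elim: n => [|n IH] //=.
rewrite cat_uniq !map_inj_uniq ?IH //= ?andbT; try exact: cons_inj.
by apply/hasPn => x /mapP [y _ ->]; rewrite /= nm.
Qed.

Lemma sum_tuple n (p : pred (seq bool)) (F : seq bool -> nat) :
  \sum_(t : n.-tuple bool | p t) F t = \sum_(s <- E n | p s) F s.
Proof.
rewrite -(big_map (@tval n bool) p F).
apply: perm_big; apply: uniq_perm.
- by rewrite map_inj_uniq ?index_enum_uniq //; apply: val_inj.
- exact: uniqE.
move=> s; rewrite memE; apply/mapP/idP => [[t _ ->]|sz].
  by rewrite size_tuple.
by exists (Tuple sz) => //; rewrite mem_index_enum.
Qed.

Definition cnt k n h u := \sum_(s <- E n | okp k h s && (count id s == u)) 1.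
Definition G k n h u := \sum_(s <- E n | okp k h s && (count id s == u)) find id s.

Lemma split_E n (p : pred (seq bool)) F :
  \sum_(s <- E n.+1 | p s) F s =
  \sum_(s <- E n | p (true :: s)) F (true :: s) + \sum_(s <- E n | p (false :: s)) F (false :: s).
Proof. by rewrite /= big_cat !big_map. Qed.

Lemma cnt_rec k n h u : cnt k n.+1 h u =
  (if u is u'.+1 then cnt k n (h + k) u' else 0) + (if h is h'.+1 then cnt k n h' u else 0).
Proof.
rewrite /cnt split_E /=; congr (_ + _).
  case: u => [|u]; last by [].
  by apply: big_pred0 => s /=; rewrite andbF.
by case: h => [|h] //; apply: big_pred0 => s.
Qed.

Lemma G_rec k n h u : G k n.+1 h u =
  (if h is h'.+1 then G k n h' u + cnt k n h' u else 0).
Proof.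
rewrite /G split_E /= big1 // add0n.
case: h => [|h]; first by apply: big_pred0 => s.
by rewrite /cnt -big_split /=; apply: eq_bigr => s _; rewrite addn1.
Qed.

Lemma G0 k n u : G k n 0 u = 0.
Proof.
case: n => [|n]; last by rewrite G_rec.
by rewrite /G /= big_cons big_nil; case: ifP.
Qed.

Lemma G_sum k u i n : G k (n + i) i u = \sum_(j < i) cnt k (n + j) j u.
Proof.
elim: i n => [|i IH] n; first by rewrite big_ord0 G0.
by rewrite addnS G_rec IH big_ord_recr.
Qed.

Lemma key k u : 'C(k.+1 * u + k, u.+1) = k * 'C(k.+1 * u + k, u).
Proof.
apply/eqP; rewrite -(eqn_pmul2l (ltn0Sn u)) mul_bin_left.
have -> : k.+1 * u + k - u = u.+1 * k by lia.
by rewrite mulnA.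
Qed.

Definition Pf k u n := if u is u'.+1 then k * 'C(n, u') else 0.

Lemma PfS k u n : k * 'C(n.+1, u) = k * 'C(n, u) + Pf k u n.
Proof. by case: u => [|u] /=; rewrite ?bin0 ?addn0 // binS mulnDr. Qed.

Lemma cnt_formula k u h n : n = k.+1 * u + h -> cnt k n h u + Pf k u n = 'C(n, u).
Proof.
elim: u h n => [|u IHu] h n ->.
  rewrite muln0 add0n addn0 bin0 /=; elim: h => [|h IHh].
    by rewrite /cnt /= big_cons big_nil.
  by rewrite cnt_rec.
elim: h => [|h IHh].
  have eM : k.+1 * u.+1 + 0 = (k.+1 * u + k).+1 by rewrite mulnS; lia.
  rewrite eM cnt_rec /= add0n addn0 binS key.
  have := IHu k (k.+1 * u + k) erefl.
  have := PfS k u (k.+1 * u + k).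
  lia.
rewrite addnS cnt_rec /= binS.
have := IHu (h.+1 + k) (k.+1 * u.+1 + h) ltac:(rewrite mulnS; lia).
have := PfS k u (k.+1 * u.+1 + h).
simpl in IHh; lia.
Qed.

Lemma hockey A m j : \sum_(i < j) 'C(A + i, m) + 'C(A, m.+1) = 'C(A + j, m.+1).
Proof.
elim: j => [|j IH]; first by rewrite big_ord0 addn0.
by rewrite big_ord_recr /= addnS binS -IH; rewrite [LHS]addnAC.
Qed.

Lemma main_nat k m : 0 < m ->
  \sum_(P : ((k.+1) * (m.+1)).-tuple bool | is_kDyck k P && (count id P == m.+1)%N)
      first_down_run P = \sum_(j < k) cnt k (k.+1 * m + j) j m.
Proof.
move=> hm.
rewrite (sum_tuple _ (fun s => is_kDyck k s && (count id s == m.+1)) first_down_run).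
have -> : k.+1 * m.+1 = (k.+1 * m + k).+1 by rewrite mulnS; lia.
rewrite split_E [X in (_ + X)%N]big_pred0 ?addn0; last first.
  by move=> s; rewrite is_kDyckE.
rewrite -G_sum /G; apply: eq_big => s; first by rewrite is_kDyckE /= add0n.
by move=> _; rewrite /first_down_run /= drop0.
Qed.

Import GRing.Theory Num.Theory.
Local Open Scope ring_scope.

Theorem mainTheorem6 (k m : nat) (hk : (1 <= k)%N) (hm : (1 <= m)%N) :
  ((\sum_(P : ((k.+1) * (m.+1)).-tuple bool
          | is_kDyck k P && (count id P == m.+1)%N)
      first_down_run P)%N)%:R
  = (k%:R / (m.+1)%:R) * ('C((k.+1) * m, m))%:R :> rat.
Proof.
rewrite main_nat //.
set T := (\sum_(j < k) _)%N.
suff H : (m.+1 * T = k * 'C(k.+1 * m, m))%N.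
  apply: (mulfI (x := (m.+1)%:R)); first by rewrite pnatr_eq0.
  rewrite -natrM H natrM mulrA mulrCA divff ?mulr1 //; by rewrite pnatr_eq0.
rewrite {}/T; case: m hm => [//|m'] _.
set T := (\sum_(j < k) _)%N.
set A := (k.+1 * m'.+1)%N.
have E1 : (T + k * \sum_(j < k) 'C(A + j, m') = \sum_(j < k) 'C(A + j, m'.+1))%N.
  rewrite big_distrr -big_split /=; apply: eq_bigr => j _.
  by have := @cnt_formula k m'.+1 j _ erefl.
have E2 := hockey A m'.+1 k.
have E3 := hockey A m' k.
have E4 : 'C(A + k, m'.+2) = (k * 'C(A + k, m'.+1))%N by rewrite key.
have E5 : (m'.+2 * 'C(A, m'.+2) = k * m'.+1 * 'C(A, m'.+1))%N.
  by rewrite mul_bin_left; congr (_ * _)%N; rewrite /A; lia.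
move: E1 E2 E3 E4 E5.
set S1 := (\sum_(j < k) 'C(A + j, m'.+1))%N.
set S2 := (\sum_(j < k) 'C(A + j, m'))%N.
set a := 'C(A, m'.+1); set b := 'C(A, m'.+2); set c := 'C(A + k, m'.+1).
move=> E1 E2 E3 E4 E5.
have F1 : (T + b = k * a)%N.
  have : (T + k * S2 + b = k * S2 + k * a)%N by rewrite -mulnDr E3 -E4 -E2 E1.
  lia.
have : (m'.+2 * T + m'.+2 * b = m'.+2 * (k * a))%N by rewrite -mulnDr F1.
rewrite E5; nia.
Qed.
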